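(* Let $a\in\mathbb F^*$ and let $g,h\in\mathcal R$ satisfy $x^n-a=hg$, and let $\widehat h^{l}=\rho_l(\theta^{-n}(h))$. Then $$M^\theta_a(\overline g)\,M^\theta_c(\overline{a^{-1}h})=M^\theta_a(\overline g)\,M^\theta_{a^{-1}}(\overline{\widehat h^{l}})^{\mathsf T}=0,\qquad\text{where } c=\gamma(a,g).$$
   Context: $\mathbb F$ is a finite field, $\theta\in\mathrm{Aut}(\mathbb F)$, $\mathcal R=\mathbb F[x;\theta]$ the skew polynomial ring (elements $\sum f_ix^i$ with left coefficients, $xb=\theta(b)x$). Integer powers of $\theta$ act on $\mathcal R$ coefficientwise. Fix $n\in\mathbb N$. For $b\in\mathbb F^*$, $\mathcal S_b=\mathcal R/\mathcal R(x^n-b)$, $\overline f$ is the coset of $f$ (in $M^\theta_b(\overline f)$ taken in $\mathcal S_b$), $\mathfrak v_b:\mathcal S_b\to\mathbb F^n$ the inverse of $(c_0,\dots,c_{n-1})\mapsto\overline{\sum_{i=0}^{n-1}c_ix^i}$. $M^\theta_b(\overline f)$ is the $n\times n$ matrix whose row with index $i$ ($0\le i\le n-1$) is $\mathfrak v_b(\overline{x^if})$. For a right divisor $g=\sum g_ix^i$ of $x^n-a$, $\gamma(a,g)=ag_0^{-1}\theta^n(g_0)$. For nonzero $f=\sum_{i=0}^tf_ix^i$ with $f_t\neq0$, $\rho_l(f)=\sum_{i=0}^t\theta^i(f_{t-i})x^i$. *)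

(* Defs.v *)
From HB Require Import structures.
From mathcomp Require Import all_boot all_order all_algebra all_field.
Set Implicit Arguments. Unset Strict Implicit. Unset Printing Implicit Defensive.
Import GRing.Theory.
Local Open Scope ring_scope.

(* Skew polynomial ring F[x; theta]: elements sum f_i x^i (left coefficients)
   are represented by their coefficient sequences, i.e. by {poly F} viewed only
   as an additive group; the multiplication is the skew one, x b = theta(b) x. *)
Section Skew.
Variable F : finFieldType.
Variable theta : {rmorphism F -> F}.

(* theta^{-1} (theta is bijective since F is finite) *)
Definition theta_inv : F -> F := invF (fmorph_inj theta).

Definition skmul (p q : {poly F}) : {poly F} :=
  \poly_(k < (size p + size q).-1) \sum_(i < k.+1) p`_i * iter i theta (q`_(k - i)).

Definition theta_pow (m : nat) (p : {poly F}) : {poly F} := map_poly (iter m theta) p.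
Definition theta_invpow (m : nat) (p : {poly F}) : {poly F} := map_poly (iter m theta_inv) p.

(* One step of right division by the monic d: cancel the leading term of f
   by subtracting (lc(f) x^(deg f - deg d)) * d. *)
Definition rmod_step (d f : {poly F}) : {poly F} :=
  if (size f < size d)%N then f
  else f - skmul ((lead_coef f)%:P * 'X^(size f - size d)) d.

(* Right remainder of f modulo d, i.e. the representative of degree < deg d
   of the coset of f in R / R d. *)
Definition rmod (d f : {poly F}) : {poly F} := iter (size f) (rmod_step d) f.

(* v_b(\bar f) : coefficient vector (c_0..c_{n-1}) of the reduced representative
   of f in S_b = R / R (x^n - b). *)
Definition vb (n : nat) (b : F) (f : {poly F}) : 'rV[F]_n :=
  \row_(j < n) (rmod ('X^n - b%:P) f)`_j.

Definition Mtheta (n : nat) (b : F) (f : {poly F}) : 'M[F]_n :=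
  \matrix_(i < n) vb n b (skmul 'X^i f).

Definition gamma (n : nat) (a : F) (g : {poly F}) : F :=
  a * (g`_0)^-1 * iter n theta (g`_0).

Definition rho_l (f : {poly F}) : {poly F} :=
  \poly_(i < size f) iter i theta (f`_((size f).-1 - i)).

End Skew.

(* Main.v *)
Require Import Defs.
From HB Require Import structures.
From mathcomp Require Import all_boot all_order all_algebra all_field.
From mathcomp Require Import zify.
Set Implicit Arguments. Unset Strict Implicit. Unset Printing Implicit Defensive.
Import GRing.Theory.
Local Open Scope ring_scope.

Section Sk.
Variable F : finFieldType.
Variable theta : {rmorphism F -> F}.
Local Notation Sk := (skmul theta).
Local Notation th i := (iter i theta).

Lemma th0 i : th i 0 = 0. Proof. by elim: i => //= i ->; rewrite rmorph0. Qed.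
Lemma th1 i : th i 1 = 1. Proof. by elim: i => //= i ->; rewrite rmorph1. Qed.
Lemma thD i x y : th i (x + y) = th i x + th i y.
Proof. by elim: i => //= i ->; rewrite rmorphD. Qed.
Lemma thN i x : th i (- x) = - th i x.
Proof. by elim: i => //= i ->; rewrite rmorphN. Qed.
Lemma thB i x y : th i (x - y) = th i x - th i y.
Proof. by rewrite thD thN. Qed.
Lemma thM i x y : th i (x * y) = th i x * th i y.
Proof. by elim: i => //= i ->; rewrite rmorphM. Qed.
Lemma th_eq0 i x : (th i x == 0) = (x == 0).
Proof. by elim: i => //= i <-; rewrite fmorph_eq0. Qed.
Lemma thV i x : th i x^-1 = (th i x)^-1.
Proof. by elim: i => //= i ->; rewrite fmorphV. Qed.
Lemma thA i j x : th i (th j x) = th (i + j) x.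
Proof. by rewrite iterD. Qed.
Lemma thC i j x : th i (th j x) = th j (th i x).
Proof. by rewrite !thA addnC. Qed.

Lemma coef0_size (p : {poly F}) i : (size p <= i)%N -> p`_i = 0.
Proof. by move=> h; rewrite nth_default. Qed.

Lemma coefS p q k : (Sk p q)`_k = \sum_(i < k.+1) p`_i * th i (q`_(k - i)).
Proof.
rewrite /skmul coef_poly; case: ifP => // hk; symmetry; apply: big1 => i _.
case: (ltnP i (size p)) => hi.
  by rewrite (@coef0_size q) ?th0 ?mulr0 //; move/negbT: hk; rewrite -leqNgt; lia.
by rewrite coef0_size // mul0r.
Qed.

Lemma SkDl p1 p2 q : Sk (p1 + p2) q = Sk p1 q + Sk p2 q.
Proof.
apply/polyP => k; rewrite coefD !coefS -big_split; apply: eq_bigr => i _.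
by rewrite coefD mulrDl.
Qed.
Lemma SkDr p q1 q2 : Sk p (q1 + q2) = Sk p q1 + Sk p q2.
Proof.
apply/polyP => k; rewrite coefD !coefS -big_split; apply: eq_bigr => i _.
by rewrite coefD thD mulrDr.
Qed.
Lemma SkBl p1 p2 q : Sk (p1 - p2) q = Sk p1 q - Sk p2 q.
Proof.
apply/polyP => k; rewrite coefB !coefS -sumrB; apply: eq_bigr => i _.
by rewrite coefB mulrBl.
Qed.
Lemma SkBr p q1 q2 : Sk p (q1 - q2) = Sk p q1 - Sk p q2.
Proof.
apply/polyP => k; rewrite coefB !coefS -sumrB; apply: eq_bigr => i _.
by rewrite coefB thB mulrBr.
Qed.
Lemma SkZl c p q : Sk (c *: p) q = c *: Sk p q.
Proof.
apply/polyP => k; rewrite coefZ !coefS mulr_sumr; apply: eq_bigr => i _.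
by rewrite coefZ mulrA.
Qed.
Lemma Sk0l q : Sk 0 q = 0.
Proof. by apply/polyP => k; rewrite coefS coef0 big1 // => i _; rewrite coef0 mul0r. Qed.
Lemma Sk0r p : Sk p 0 = 0.
Proof. by apply/polyP => k; rewrite coefS coef0 big1 // => i _; rewrite coef0 th0 mulr0. Qed.

Lemma Sk_suml N (f : 'I_N -> {poly F}) q :
  Sk (\sum_(i < N) f i) q = \sum_(i < N) Sk (f i) q.
Proof. exact: (big_morph (fun p => Sk p q) (fun p1 p2 => SkDl p1 p2 q) (Sk0l q)). Qed.
Lemma Sk_sumr N (f : 'I_N -> {poly F}) p :
  Sk p (\sum_(i < N) f i) = \sum_(i < N) Sk p (f i).
Proof. exact: (big_morph (fun q => Sk p q) (fun q1 q2 => SkDr p q1 q2) (Sk0r p)). Qed.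

Lemma sum_single N (G : 'I_N -> F) (i0 : 'I_N) :
  (forall i : 'I_N, i != i0 -> G i = 0) -> \sum_(i < N) G i = G i0.
Proof. by move=> h; rewrite (bigD1 i0) //= big1 ?addr0 // => i /h. Qed.

Lemma coef_SkXl c i q k :
  (Sk (c *: 'X^i) q)`_k = if (i <= k)%N then c * th i (q`_(k - i)) else 0.
Proof.
rewrite coefS; case: leqP => hik.
  have hi : (i < k.+1)%N by lia.
  rewrite (@sum_single _ _ (Ordinal hi)) /=; first by rewrite coefZ coefXn eqxx mulr1.
  move=> j hj; rewrite coefZ coefXn.
  have -> : (j == i :> nat) = false by apply/negbTE; apply: contra hj => /eqP e; apply/eqP/val_inj.
  by rewrite mulr0 mul0r.
apply: big1 => j _; rewrite coefZ coefXn.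
have -> : (j == i :> nat) = false by apply/negbTE; have := ltn_ord j; lia.
by rewrite mulr0 mul0r.
Qed.

Lemma coef_SkXr p c i k :
  (Sk p (c *: 'X^i))`_k = if (i <= k)%N then p`_(k - i) * th (k - i) c else 0.
Proof.
rewrite coefS; case: leqP => hik.
  have hi : (k - i < k.+1)%N by lia.
  rewrite (@sum_single _ _ (Ordinal hi)) /=.
    by rewrite coefZ coefXn subKn // eqxx mulr1.
  move=> j hj; rewrite coefZ coefXn.
  have -> : (k - j == i)%N = false.
    apply/negbTE; apply: contra hj => /eqP e; apply/eqP/val_inj => /=.
    have := ltn_ord j; lia.
  by rewrite mulr0 th0 mulr0.
apply: big1 => j _; rewrite coefZ coefXn.
have -> : (k - j == i)%N = false by apply/negbTE; have := ltn_ord j; lia.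
by rewrite mulr0 th0 mulr0.
Qed.


Lemma SkXX c i d j : Sk (c *: 'X^i) (d *: 'X^j) = (c * th i d) *: 'X^(i + j).
Proof.
apply/polyP => k; rewrite coef_SkXl coefZ coefXn coefZ coefXn.
have [-> | hk] := eqVneq k (i + j).
  by rewrite leq_addr addKn eqxx !mulr1.
case: leqP => hik; last by rewrite mulr0.
rewrite (_ : (k - i == j)%N = false) /= ?mulr0 ?th0 ?mulr0 //; apply/negbTE/eqP.
by move: hk => /eqP; lia.
Qed.

Lemma poly_decomp (p : {poly F}) : p = \sum_(i < size p) p`_i *: 'X^i.
Proof. by rewrite -poly_def coefK. Qed.

Lemma poly_decompN (p : {poly F}) N : (size p <= N)%N -> p = \sum_(i < N) p`_i *: 'X^i.
Proof.
move=> hN; rewrite -poly_def; apply/polyP => k; rewrite coef_poly.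
by case: ltnP => // hk; rewrite coef0_size //; lia.
Qed.

Lemma SkA p q r : Sk p (Sk q r) = Sk (Sk p q) r.
Proof.
rewrite (poly_decomp p) !(Sk_suml, Sk_sumr); apply: eq_bigr => i _.
rewrite (poly_decomp q) !(Sk_suml, Sk_sumr); apply: eq_bigr => j _.
rewrite (poly_decomp r) !(Sk_suml, Sk_sumr); apply: eq_bigr => k _.
by rewrite !SkXX thM thA !mulrA addnA.
Qed.

Lemma polyCX (c : F) : c%:P = c *: 'X^0.
Proof. by rewrite expr0 -alg_polyC. Qed.
Lemma SkCr p c k : (Sk p c%:P)`_k = p`_k * th k c.
Proof. by rewrite polyCX coef_SkXr subn0. Qed.
Lemma SkCl c q : Sk c%:P q = c *: q.
Proof. by apply/polyP => k; rewrite polyCX coef_SkXl subn0 coefZ. Qed.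
Lemma Sk1r p : Sk p 1 = p.
Proof. by apply/polyP => k; rewrite -polyC1 SkCr th1 mulr1. Qed.
Lemma Sk1l q : Sk 1 q = q.
Proof. by rewrite -polyC1 SkCl scale1r. Qed.

Lemma size_Sk_leq p q : (size (Sk p q) <= (size p + size q).-1)%N.
Proof. exact: size_poly. Qed.

Lemma size_Sk p q : p != 0 -> q != 0 -> size (Sk p q) = (size p + size q).-1.
Proof.
move=> p0 q0; apply/eqP; rewrite eqn_leq size_Sk_leq /=.
have sp := size_poly_gt0 p; have sq := size_poly_gt0 q.
rewrite p0 in sp; rewrite q0 in sq.
have [K KE] : exists K, K = ((size p).-1 + (size q).-1)%N by eexists.
have hK : (Sk p q)`_K != 0.
  rewrite coefS.
  have hi : ((size p).-1 < K.+1)%N by lia.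
  rewrite (@sum_single _ _ (Ordinal hi)) /=.
    rewrite (_ : (K - (size p).-1 = (size q).-1)%N); last by lia.
    by rewrite mulf_neq0 // ?th_eq0 -lead_coefE lead_coef_eq0.
  move=> j hj; have hj' : (j : nat) != (size p).-1 by apply: contra hj => /eqP e; apply/eqP/val_inj.
  case: (ltnP j (size p)) => hjp; last by rewrite coef0_size // mul0r.
  by rewrite (@coef0_size q) ?th0 ?mulr0 //; have := ltn_ord j; lia.
suff : (K < size (Sk p q))%N by set s1 := size p in sp KE *; set s2 := size q in sq KE *; set s3 := size (Sk p q); lia.
by rewrite ltnNge; apply: contra hK => /coef0_size ->.
Qed.


Section Rmod.
Variable n : nat.
Hypothesis n0 : (0 < n)%N.

Local Notation d b := ('X^n - (b : F)%:P).

Lemma coef_d b k : (d b)`_k = (k == n)%:R - (if k == 0%N then b else 0).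
Proof. by rewrite coefB coefXn coefC. Qed.
Lemma coef_dn b : (d b)`_n = 1.
Proof.
rewrite coef_d eqxx /= mulr1n.
have -> : (n == 0)%N = false by apply/negbTE; rewrite -lt0n.
by rewrite subr0.
Qed.
Lemma coef_dgt b k : (n < k)%N -> (d b)`_k = 0.
Proof.
move=> hk; rewrite coef_d.
have -> : (k == n) = false by apply/negbTE; rewrite neq_ltn hk orbT.
have -> : (k == 0)%N = false by apply/negbTE; rewrite -lt0n; apply: leq_trans hk.
by rewrite /= mulr0n subr0.
Qed.
Lemma size_d b : size (d b) = n.+1.
Proof. exact: size_XnsubC. Qed.

Lemma rstep_size b (f : {poly F}) : (n < size f)%N -> (size (rmod_step theta (d b) f) < size f)%N.
Proof.
move=> hf; rewrite /rmod_step size_d (_ : (size f < n.+1)%N = false) /=; last by apply/negbTE; rewrite -leqNgt.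
set m := (size f - n.+1)%N.
have hs : (size (f - Sk ((lead_coef f)%:P * 'X^m) (d b))%R <= (size f).-1)%N.
  apply/leq_sizeP => k hk; rewrite coefB mul_polyC coef_SkXl.
  rewrite (_ : (m <= k)%N = true); last by apply/idP; rewrite /m; lia.
  case: (ltnP k (size f)) => hk2.
    have -> : k = (size f).-1 by lia.
    rewrite (_ : ((size f).-1 - m = n)%N); last by rewrite /m; lia.
    by rewrite coef_dn th1 mulr1 lead_coefE subrr.
  rewrite (coef0_size hk2) coef_dgt ?th0 ?mulr0 ?subrr //; rewrite /m; lia.
by apply: (leq_ltn_trans hs); rewrite ltn_predL; apply: leq_ltn_trans hf.
Qed.

Lemma rmod_iter b (f : {poly F}) m : exists q,
  f = iter m (rmod_step theta (d b)) f + Sk q (d b) /\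
  ((size (iter m (rmod_step theta (d b)) f) <= n)%N \/
   (size (iter m (rmod_step theta (d b)) f) + m <= size f)%N).
Proof.
elim: m => [|m [q [E H]]]; first by exists 0; rewrite Sk0l addr0 /=; split => //; right; rewrite addn0.
set u := iter m _ f in E H *.
rewrite iterS -/u.
case: (leqP (size u) n) => hu.
  by exists q; rewrite /rmod_step size_d ltnS hu /=; split; [exact: E | left].
have hu' := rstep_size b hu.
exists (q + (lead_coef u)%:P * 'X^(size u - n.+1)); split.
  rewrite {1}E /rmod_step size_d (_ : (size u < n.+1)%N = false) /= ?SkDl; last by apply/negbTE; rewrite -leqNgt.
  by rewrite [Sk q _ + _]addrC addrA subrK.
case: H => H; first by lia.
by right; lia.
Qed.

Lemma rmod_spec b (f : {poly F}) : exists q, f = rmod theta (d b) f + Sk q (d b) /\ (size (rmod theta (d b) f) <= n)%N.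
Proof.
have [q [E H]] := rmod_iter b f (size f).
rewrite /rmod; exists q; split; first exact: E.
case: H => H; first exact: H.
move: H; rewrite -{3}[size f]add0n leq_add2r => H.
exact: leq_trans H (leq0n n).
Qed.

Lemma rmod_uniq b (f r q : {poly F}) : f = r + Sk q (d b) -> (size r <= n)%N -> rmod theta (d b) f = r.
Proof.
move=> E hr; have [q' [E' H']] := rmod_spec b f.
have : rmod theta (d b) f - r = Sk (q - q') (d b).
  have h1 : rmod theta (d b) f = f - Sk q' (d b) by apply/eqP; rewrite eq_sym subr_eq -E'.
  have h2 : r = f - Sk q (d b) by apply/eqP; rewrite eq_sym subr_eq -E.
  by rewrite SkBl h1 h2 opprB addrC addrA subrK.
have [-> | qq0] := eqVneq (q - q') 0.
  by rewrite Sk0l => /eqP; rewrite subr_eq0 => /eqP.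
move=> EE; have : (size (Sk (q - q') (d b)) <= n)%N.
  by rewrite -EE; apply: (leq_trans (size_polyD _ _)); rewrite size_polyN geq_max H' hr.
rewrite size_Sk //; last by rewrite -size_poly_eq0 size_d.
rewrite size_d => hs; exfalso; have := size_poly_gt0 (q - q'); rewrite qq0.
move: hs; set s := size (q - q'); lia.
Qed.

Lemma rmodD b f1 f2 : rmod theta (d b) (f1 + f2) = rmod theta (d b) f1 + rmod theta (d b) f2.
Proof.
have [q1 [E1 H1]] := rmod_spec b f1; have [q2 [E2 H2]] := rmod_spec b f2.
apply: (@rmod_uniq _ _ _ (q1 + q2)).
  by rewrite SkDl {1}E1 {1}E2; rewrite addrACA.
by apply: (leq_trans (size_polyD _ _)); rewrite geq_max H1 H2.
Qed.

Lemma rmodZ b c f : rmod theta (d b) (c *: f) = c *: rmod theta (d b) f.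
Proof.
have [q1 [E1 H1]] := rmod_spec b f.
apply: (@rmod_uniq _ _ _ (c *: q1)).
  by rewrite SkZl {1}E1 scalerDr.
by apply: (leq_trans (size_scale_leq _ _)).
Qed.

Lemma rmod0 b : rmod theta (d b) 0 = 0.
Proof. by apply: (@rmod_uniq _ _ _ 0); rewrite ?Sk0l ?addr0 ?size_poly0. Qed.

Lemma rmod_sum b N (G : 'I_N -> {poly F}) :
  rmod theta (d b) (\sum_(i < N) G i) = \sum_(i < N) rmod theta (d b) (G i).
Proof. exact: (big_morph _ (rmodD b) (rmod0 b)). Qed.

Lemma rmod_Sk b q : rmod theta (d b) (Sk q (d b)) = 0.
Proof. by apply: (@rmod_uniq _ _ _ q); rewrite ?add0r ?size_poly0. Qed.

End Rmod.



Local Notation ti k := (iter k (theta_inv theta)).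

Lemma th_inj k : injective (th k).
Proof. by move=> x y e; apply/eqP; rewrite -subr_eq0 -(th_eq0 k) thB e subrr. Qed.

Lemma th_ti k x : th k (ti k x) = x.
Proof.
elim: k x => // k IH x; rewrite iterSr iterS.
by rewrite /theta_inv f_invF IH.
Qed.

Lemma ti_eq0 k x : (ti k x == 0) = (x == 0).
Proof. by rewrite -[ti k x == 0](th_eq0 k) th_ti. Qed.

Lemma ti0 k : ti k 0 = 0.
Proof. by apply/eqP; rewrite ti_eq0. Qed.

Section Main.
Variable n : nat.
Hypothesis n0 : (0 < n)%N.
Variables (a : F) (g h : {poly F}).
Hypothesis a0 : a != 0.
Hypothesis E : 'X^n - a%:P = Sk h g.

Local Notation d b := ('X^n - (b : F)%:P).

Lemma coefS0 p q : (Sk p q)`_0 = p`_0 * q`_0.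
Proof. by rewrite coefS big_ord1. Qed.

Lemma g00 : g`_0 != 0.
Proof.
have := coefS0 h g; rewrite -E coef_d (_ : (0 == n)%N = false) /=; last by apply/negbTE; rewrite eq_sym -lt0n.
rewrite mulr0n sub0r => e; apply/eqP => g0; move: a0; rewrite -oppr_eq0 e g0 mulr0 eqxx.
by [].
Qed.

Lemma h_neq0 : h != 0.
Proof. by apply/eqP => h0; have := coef_dn n0 a; rewrite E h0 Sk0l coef0 => /eqP; rewrite eq_sym oner_eq0. Qed.
Lemma g_neq0 : g != 0.
Proof. by apply/eqP => g0; have := g00; rewrite g0 coef0 eqxx. Qed.

Lemma size_hg : ((size h + size g).-1 = n.+1)%N.
Proof. by rewrite -size_Sk ?h_neq0 ?g_neq0 // -E size_d. Qed.

Lemma size_h : (size h <= n.+1)%N.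
Proof. have := size_hg; have := size_poly_gt0 g; rewrite g_neq0; set s := size g; set t := size h; lia. Qed.

Definition cc := gamma theta n a g.

Lemma cc0 : cc != 0.
Proof. by rewrite /cc /gamma !mulf_neq0 ?invr_eq0 ?th_eq0 ?g00. Qed.

Lemma keyK : Sk g (Sk a^-1%:P h) = cc^-1 *: d cc.
Proof.
set a' := a^-1.
have a'0 : a' != 0 by rewrite invr_eq0.
set w := Sk g (Sk a'%:P h).
have Ew : Sk w g = Sk g (a' *: 'X^n) - g.
  rewrite /w -SkA SkCl SkZl -E scalerBr scale_polyC mulVf // polyC1.
  by rewrite SkBr Sk1r.
set u := w + 1.
have Eu : Sk u g = Sk g (a' *: 'X^n) by rewrite /u SkDl Sk1l Ew subrK.
have cj : forall j, (j < n)%N -> u`_j = 0.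
  elim/ltn_ind => j IH hj.
  have := congr1 (fun p : {poly F} => p`_j) Eu; rewrite /= coefS big_ord_recr /= big1; last first.
    by move=> i _; rewrite IH ?mul0r //; apply: ltn_trans hj.
  rewrite add0r coef_SkXr (_ : (n <= j)%N = false); last by apply/negbTE; rewrite -ltnNge.
  by move/eqP; rewrite subnn mulf_eq0 th_eq0 (negbTE g00) orbF => /eqP.
have cn : u`_n * th n g`_0 = g`_0 * a'.
  have := congr1 (fun p : {poly F} => p`_n) Eu; rewrite /= coefS big_ord_recr /= big1; last first.
    by move=> i _; rewrite cj ?mul0r.
  by rewrite add0r coef_SkXr leqnn subnn /= => ->.
have su : (size u <= n.+1)%N.
  apply: (leq_trans (size_polyD _ _)); rewrite geq_max size_poly1 ltnS leq0n andbT.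
  rewrite /w; apply: (leq_trans (size_Sk_leq _ _)); rewrite SkCl size_scale //.
  by have := size_hg; set s := size g; set t := size h; lia.
have Eu' : u = (g`_0 * a' / th n g`_0) *: 'X^n.
  apply/polyP => j; rewrite coefZ coefXn.
  case: (ltngtP j n) => hj.
  - by rewrite cj //= ?mulr0n mulr0.
  - by rewrite (coef0_size (leq_trans su hj)) /= ?mulr0n mulr0.
  - by rewrite hj /= ?mulr1n mulr1 -cn mulfK // th_eq0 g00.
have -> : w = u - 1 by rewrite /u addrK.
rewrite Eu' scalerBr scale_polyC mulVf ?cc0 // polyC1; congr (_ *: _ - _).
rewrite /cc /gamma !invfM invrK /a'.
by rewrite [g`_0 * _]mulrC.
Qed.


Lemma Mentry b f (i j : 'I_n) :
  Mtheta theta n b f i j = (rmod theta (d b) (Sk 'X^i f))`_j.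
Proof. by rewrite !mxE. Qed.

Lemma rowsum b k (r : {poly F}) (j : 'I_n) : (size r <= n)%N ->
  \sum_(l < n) r`_l * Mtheta theta n b k l j = (rmod theta (d b) (Sk r k))`_j.
Proof.
move=> hr; rewrite {2}(poly_decompN hr) Sk_suml (rmod_sum n0) coef_sum.
by apply: eq_bigr => l _; rewrite SkZl (rmodZ n0) coefZ Mentry.
Qed.

Lemma part1 : Mtheta theta n a g *m Mtheta theta n cc (Sk a^-1%:P h) = 0.
Proof.
apply/matrixP => i j; rewrite mxE [RHS]mxE.
set k := Sk a^-1%:P h.
have [q [Eq Hq]] := rmod_spec n0 a (Sk 'X^i g).
set r := rmod theta (d a) (Sk 'X^i g) in Eq Hq.
rewrite (eq_bigr (fun l : 'I_n => r`_l * Mtheta theta n cc k l j)); last by move=> l _; rewrite [Mtheta _ _ a g _ _]Mentry.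
rewrite rowsum //.
have Er : r = Sk ('X^i - Sk q h) g.
  by rewrite SkBl -SkA -E; apply/eqP; rewrite eq_sym subr_eq -Eq.
rewrite Er -SkA /k keyK -SkCl SkA (rmod_Sk n0).
by rewrite coef0.
Qed.

Lemma Hrel q : th n (a^-1 * h`_q) = h`_q * th q (cc^-1).
Proof.
have e : Sk h (Sk g (Sk a^-1%:P h)) = Sk (Sk h g) (Sk a^-1%:P h) by rewrite SkA.
rewrite keyK -E scalerBr scale_polyC mulVf ?cc0 // polyC1 SkBr Sk1r in e.
rewrite SkBl !SkCl scalerA mulfV // scale1r -[('X^n : {poly F})]scale1r in e.
move/(congr1 (fun p : {poly F} => p`_(q + n))): e => /=.
rewrite !coefB scalerA mulr1 coef_SkXr coef_SkXl leq_addl addnK mul1r coefZ.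
by move/(addIr (- h`_(q + n))) => ->.
Qed.

Lemma rmod_formula b (P : {poly F}) : (size P <= n + n)%N ->
  rmod theta (d b) P = \poly_(m < n) (P`_m + P`_(m + n) * th m b).
Proof.
move=> hP; set Q := \poly_(m < n) P`_(m + n).
apply: (@rmod_uniq _ n0 _ _ _ Q); last exact: size_poly.
apply/polyP => m; rewrite coefD SkBr coefB SkCr -[('X^n : {poly F})]scale1r coef_SkXr th1 mulr1.
rewrite !coef_poly.
case: (ltnP m n) => hm.
  by rewrite sub0r addrK.
rewrite add0r mul0r subr0.
case: ltnP => hmn; first by rewrite subnK.
by rewrite coef0_size //; apply: leq_trans hP _; lia.
Qed.

Lemma Mexplicit b (f : {poly F}) (j l : 'I_n) : (size f <= n.+1)%N ->
  Mtheta theta n b f j l =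
  (if (j <= l)%N then th j (f`_(l - j)) else 0) + th j (f`_(l + n - j)) * th l b.
Proof.
move=> hf; rewrite Mentry rmod_formula; last first.
  apply: (leq_trans (size_Sk_leq _ _)); rewrite size_polyXn.
  have := ltn_ord j; set s := size f in hf *; lia.
rewrite coef_poly ltn_ord -['X^j]scale1r !coef_SkXl !mul1r.
by rewrite (_ : (j <= l + n)%N = true) //; apply/idP; have := ltn_ord j; lia.
Qed.

Section Part2.
Variable t : nat.
Hypothesis ht : size h = t.+1.

Definition hhat := rho_l theta (theta_invpow theta n h).
Definition kk := Sk a^-1%:P h.

Lemma t_le : (t <= n)%N.
Proof. by have := size_h; rewrite ht. Qed.

Lemma hq0 q : (t < q)%N -> h`_q = 0.
Proof. by move=> hq; rewrite coef0_size // ht. Qed.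

Lemma sh' : size (theta_invpow theta n h) = size h.
Proof. by rewrite /theta_invpow size_map_poly_id0 // ti_eq0 lead_coef_eq0 h_neq0. Qed.

Lemma size_hhat : (size hhat <= n.+1)%N.
Proof. by rewrite /hhat /rho_l; apply: (leq_trans (size_poly _ _)); rewrite sh' size_h. Qed.

Lemma size_kk : (size kk <= n.+1)%N.
Proof. by rewrite /kk SkCl size_scale ?size_h // invr_eq0. Qed.

Lemma zc p j : th n (th j (hhat`_p)) = if (p <= t)%N then th (j + p) (h`_(t - p)) else 0.
Proof.
rewrite /hhat /rho_l coef_poly sh' ht ltnS /=.
case: ifP => _; last by rewrite !th0.
by rewrite /theta_invpow coef_map_id0 ?ti0 // [th j _]thA thC th_ti.
Qed.

Lemma kc q l : th n (th l (kk`_q)) = th l (h`_q * th q cc^-1).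
Proof. by rewrite /kk SkCl coefZ thC Hrel. Qed.

Lemma sig_lt (j : 'I_n) : ((if (j + t < n)%N then (j + t)%N else (j + t - n)%N) < n)%N.
Proof. by case: ifP => // _; have := ltn_ord j; have := t_le; lia. Qed.

Definition sig (j : 'I_n) : 'I_n := Ordinal (sig_lt j).
Definition Dj (j : 'I_n) : F := if (j + t < n)%N then th (j + t) (ti n cc) else 1.

Lemma ZY (j l : 'I_n) : Mtheta theta n a^-1 hhat j l = Mtheta theta n cc kk l (sig j) * Dj j.
Proof.
apply: (@th_inj n).
rewrite !Mexplicit ?size_hhat ?size_kk // /Dj /=.
have hj := ltn_ord j; have hl := ltn_ord l; have tn := t_le.
have kcC := kc; have C0 := cc0.
move: kcC C0; move: cc => C kcC C0.
have CC : forall i, th i C^-1 * th i C = 1 by move=> i; rewrite thV mulVf // th_eq0.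
case: (ltnP (j + t) n) => hjt /=.
  rewrite !(thD, thM) kcC [th n (th (j + t) (ti n C))]thC th_ti.
  rewrite (hq0 (q := (j + t + n - l)%N)); last by lia.
  rewrite mul0r th0 mul0r addr0 zc (_ : (l + n - j <= t)%N = false); last by apply/negbTE; rewrite -ltnNge; lia.
  rewrite mul0r addr0.
  case: (leqP j l) => hjl.
    case: (leqP l (j + t)) => hljt.
      rewrite zc (_ : (l - j <= t)%N = true); last by apply/idP; lia.
      rewrite kcC thM thA (_ : (j + (l - j) = l)%N); last by lia.
      rewrite (_ : (t - (l - j) = j + t - l)%N); last by lia.
      rewrite (_ : (l + (j + t - l) = j + t)%N); last by lia.
      by rewrite -mulrA CC mulr1.
    rewrite th0 mul0r zc (_ : (l - j <= t)%N = false) //; apply/negbTE; rewrite -ltnNge; lia.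
  rewrite th0 (_ : (l <= j + t)%N = true); last by apply/idP; lia.
  by rewrite kcC hq0 ?mul0r ?th0 ?mul0r //; lia.
rewrite mulr1 !(thD, thM) [RHS]addrC; congr (_ + _).
  rewrite (_ : (j + t - n + n - l = j + t - l)%N); last by lia.
  rewrite kcC [th n (th (j + t - n) C)]thA.
  case: (leqP j l) => hjl.
    rewrite zc (_ : (l - j <= t)%N = true); last by apply/idP; lia.
    rewrite thM thA (_ : (j + (l - j) = l)%N); last by lia.
    rewrite (_ : (t - (l - j) = j + t - l)%N); last by lia.
    rewrite (_ : (l + (j + t - l) = n + (j + t - n))%N); last by lia.
    by rewrite -mulrA CC mulr1.
  by rewrite th0 hq0 ?mul0r ?th0 ?mul0r //; lia.
rewrite zc; case: (leqP l (j + t - n)) => hls.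
  rewrite (_ : (l + n - j <= t)%N = true); last by apply/idP; lia.
  rewrite (_ : (j + (l + n - j) = n + l)%N); last by lia.
  rewrite (_ : (t - (l + n - j) = j + t - n - l)%N); last by lia.
  rewrite /kk SkCl coefZ !thA !thM mulrC.
  by [].
rewrite (_ : (l + n - j <= t)%N = false) ?mul0r ?th0 //; apply/negbTE; rewrite -ltnNge; lia.
Qed.

Lemma part2 : Mtheta theta n a g *m (Mtheta theta n a^-1 hhat)^T = 0.
Proof.
apply/matrixP => i j; rewrite mxE [RHS]mxE.
rewrite (eq_bigr (fun l : 'I_n => Mtheta theta n a g i l * Mtheta theta n cc kk l (sig j) * Dj j)); last first.
  move=> l _.
  have -> : (Mtheta theta n a^-1 hhat)^T l j = Mtheta theta n a^-1 hhat j l by rewrite [LHS]mxE.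
  by rewrite ZY mulrA.
rewrite -mulr_suml.
have := congr1 (fun M : 'M[F]_n => M i (sig j)) part1; rewrite /= mxE [in RHS]mxE => ->.
by rewrite mul0r.
Qed.

End Part2.
End Main.


End Sk.

Unset Implicit Arguments.
Set Strict Implicit.

Theorem theorem5p8 (F : finFieldType) (theta : {rmorphism F -> F}) (n : nat)
  (a : F) (g h : {poly F}) :
  a != 0 ->
  'X^n - a%:P = skmul theta h g ->
  let c := gamma theta n a g in
  let hhat := rho_l theta (theta_invpow theta n h) in
  Mtheta theta n a g *m Mtheta theta n c (skmul theta (a^-1)%:P h)
    = Mtheta theta n a g *m (Mtheta theta n a^-1 hhat)^T
  /\ Mtheta theta n a g *m (Mtheta theta n a^-1 hhat)^T = 0.
Proof.
move=> a0; case: n => [|n] E c hh.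
  by split; apply/matrixP => -[].
have n0 : (0 < n.+1)%N by [].
have P1 : Mtheta theta n.+1 a g *m Mtheta theta n.+1 c (skmul theta (a^-1)%:P h) = 0.
  exact: (part1 n0 a0 E).
have hz : h != 0 by exact: (h_neq0 n0 E).
have ht : size h = (size h).-1.+1 by rewrite prednK // size_poly_gt0.
have P2 : Mtheta theta n.+1 a g *m (Mtheta theta n.+1 a^-1 hh)^T = 0.
  exact: (part2 n0 a0 E ht).
by rewrite P1 P2.
Qed.
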